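(* Let $T$ be a string and $T'$ be obtained from $T$ by a single character edit (insertion, substitution, or deletion). Let $\mathcal{N}_2=\big((\mathsf{M}(T')\setminus\mathsf{M}(T))\setminus\{T'\}\big)\cap\mathsf{LeftM}(T)$ and $\mathcal{Q}=(\mathsf{M}(T')\cap\mathsf{M}(T))\setminus\{T'\}$. Then $$\sum_{x\in\mathcal{N}_2\cup\mathcal{Q}}\mathsf{D}_{T'}(x)\le 3\,\mathsf{size}(T)+2 .$$
   Context: Strings are over an alphabet $\Sigma$; $\mathrm{Substr}(T)$, $\mathrm{Prefix}(T)$, $\mathrm{Suffix}(T)$ are the sets of substrings, prefixes, suffixes of $T$. A string $w\in\mathrm{Substr}(T)$ is left-maximal in $T$ if $w\in\mathrm{Prefix}(T)$ or there exist distinct $a,b\in\Sigma$ with $aw,bw\in\mathrm{Substr}(T)$; right-maximal if $w\in\mathrm{Suffix}(T)$ or there exist distinct $a,b$ with $wa,wb\in\mathrm{Substr}(T)$. $\mathsf{LeftM}(T)$, $\mathsf{RightM}(T)$ denote these sets and $\mathsf{M}(T)=\mathsf{LeftM}(T)\cap\mathsf{RightM}(T)$. For a string $x$, $\mathsf{D}_T(x)=|\{a\in\Sigma: xa\in\mathrm{Substr}(T)\}|$, and $\mathsf{size}(T)=\sum_{x\in\mathsf{M}(T)}\mathsf{D}_T(x)$ (number of edges of the CDAWG of $T$). A single character edit means: insertion of one character at some position, substitution of one character by a different one, or deletion of one character. *)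

(* Defs.v *)
From mathcomp Require Import all_boot.
Set Implicit Arguments. Unset Strict Implicit. Unset Printing Implicit Defensive.

Section Strings.
Variable S : eqType.
Implicit Types (T w x : seq S).

Definition is_substr w T : bool := infix w T.

Definition substrings T : seq (seq S) :=
  undup [seq take j (drop i T) | i <- iota 0 (size T).+1, j <- iota 0 (size T).+1].

(* Left-maximal: w is a prefix of T, or aw, bw are substrings of T for distinct a,b.
   (Such a, b necessarily occur in T, so quantifying over letters of T is exact.) *)
Definition leftM T w : bool :=
  is_substr w T &&
  (prefix w T ||
   has (fun a => has (fun b => [&& a != b, is_substr (a :: w) T & is_substr (b :: w) T]) T) T).

Definition rightM T w : bool :=
  is_substr w T &&
  (suffix w T ||
   has (fun a => has (fun b => [&& a != b, is_substr (rcons w a) T & is_substr (rcons w b) T]) T) T).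

Definition maxrep T w : bool := leftM T w && rightM T w.

(* D_T(x) = |{a in Σ : xa ∈ Substr(T)}|; every such a occurs in T. *)
Definition Dout T x : nat := size [seq a <- undup T | is_substr (rcons x a) T].

Definition cdawg_size T : nat := \sum_(x <- substrings T | maxrep T x) Dout T x.

Definition single_edit T T' : Prop :=
  (exists i a, i <= size T /\ T' = take i T ++ a :: drop i T)
  \/ (exists i a, [/\ i < size T, nth a T i != a & T' = take i T ++ a :: drop i.+1 T])
  \/ (exists i, i < size T /\ T' = take i T ++ drop i.+1 T).

Definition inN2 T T' x : bool :=
  [&& maxrep T' x, ~~ maxrep T x, x != T' & leftM T x].

Definition inQ T T' x : bool := [&& maxrep T' x, maxrep T x & x != T'].

End Strings.

(* Main.v *)
Set Warnings "-notation-overridden".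
Require Import Defs.
From mathcomp Require Import all_boot zify.
Set Implicit Arguments. Unset Strict Implicit. Unset Printing Implicit Defensive.

Section Occ.
Variable S : eqType.
Implicit Types (T w x y v : seq S).

Definition occ T w p := take (size w) (drop p T) == w.

Lemma occ_infix T w p : occ T w p -> infix w T.
Proof.
move/eqP<-; apply: (@infix_trans _ (drop p T)); [exact: infix_take | exact: infix_drop].
Qed.

Lemma infix_occ T w : infix w T -> exists p, occ T w p.
Proof. by rewrite infixE => H; exists (infix_index w T). Qed.

Lemma occ_takedrop T n p : occ T (take n (drop p T)) p.
Proof.
rewrite /occ; apply/eqP; rewrite size_take; case: ltnP => // h.
by rewrite take_size take_oversize.
Qed.

Lemma occ_size T w p : occ T w p -> size w <= size T - p.
Proof. by move/eqP<-; rewrite size_take_min size_drop geq_minr. Qed.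

Lemma occ_nth (d : S) T w p i : occ T w p -> i < size w -> nth d T (p + i) = nth d w i.
Proof. by move/eqP => E Hi; rewrite -[in RHS]E nth_take // nth_drop. Qed.

Lemma occ_prefix T w v p : occ T w p -> prefix v w -> occ T v p.
Proof.
move=> /eqP E; rewrite prefixE => /eqP E2; rewrite /occ.
have hs : size v <= size w by rewrite -E2 size_take_min geq_minr.
by rewrite -(take_takel _ hs) E E2.
Qed.

Lemma occ_rcons (d : S) T w p : occ T w p -> p + size w < size T ->
  occ T (rcons w (nth d T (p + size w))) p.
Proof.
move=> /eqP E h; rewrite /occ size_rcons (take_nth d); last by rewrite size_drop; lia.
by rewrite E nth_drop.
Qed.

Lemma occ_rconsE (d : S) T w a p : occ T (rcons w a) p ->
  [/\ occ T w p, p + size w < size T & nth d T (p + size w) = a].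
Proof.
move=> oc; split.
- by apply: occ_prefix oc _; apply: prefix_rcons.
- by have := occ_size oc; rewrite size_rcons; lia.
- by rewrite (occ_nth d oc) ?size_rcons // nth_rcons ltnn eqxx.
Qed.

Lemma occ0 T v : occ T v 0 = prefix v T.
Proof. by rewrite /occ drop0 prefixE. Qed.

Lemma occ_suffix T w p : occ T w p -> size T <= p + size w -> suffix w T.
Proof.
move=> /eqP E h; rewrite -E take_oversize ?size_drop; last by lia.
exact: suffix_drop.
Qed.

Lemma occ_cons T a w p : occ T (a :: w) p -> occ T w p.+1.
Proof.
rewrite /occ /= (_ : drop p.+1 T = drop 1 (drop p T)); last by rewrite drop_drop add1n.
case: (drop p T) => [|c D] //=.
by rewrite drop0 eqseq_cons => /andP[_].
Qed.

Lemma infix_rcons_mem w a T : infix (rcons w a) T -> a \in T.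
Proof. by move/mem_infix; apply; rewrite mem_rcons mem_head. Qed.

Lemma infix_cons_mem w a T : infix (a :: w) T -> a \in T.
Proof. by move/mem_infix; apply; rewrite mem_head. Qed.

Lemma notR_lt T w p : ~~ rightM T w -> occ T w p -> p + size w < size T.
Proof.
move=> nR oc; rewrite ltnNge; apply/negP => H; case/negP: nR.
by rewrite /rightM /is_substr (occ_infix oc) (occ_suffix oc H).
Qed.

Lemma notR_eq (d : S) T w p q : ~~ rightM T w -> occ T w p -> occ T w q ->
  nth d T (p + size w) = nth d T (q + size w).
Proof.
move=> nR op oq; have lp := notR_lt nR op; have lq := notR_lt nR oq.
apply/eqP; apply: contraNT nR => ab.
rewrite /rightM /is_substr (occ_infix op) /=; apply/orP; right.
apply/hasP; exists (nth d T (p + size w)); first exact: mem_nth.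
apply/hasP; exists (nth d T (q + size w)); first exact: mem_nth.
by rewrite ab /= (occ_infix (occ_rcons d op lp)) (occ_infix (occ_rcons d oq lq)).
Qed.

Lemma leftM_take T x n : leftM T x -> leftM T (take n x).
Proof.
rewrite /leftM /is_substr => /andP[ix /orP H]; apply/andP; split.
  by apply: (@infix_trans _ x) => //; exact: infix_take.
case: H => [px|hh]; first by rewrite (prefix_trans (prefix_take _ _) px).
apply/orP; right; move/hasP: hh => [a aT /hasP[b bT /and3P[ab ia ib]]].
apply/hasP; exists a => //; apply/hasP; exists b => //; rewrite ab /=.
have h c : infix (c :: x) T -> infix (c :: take n x) T.
  by apply: infix_trans; rewrite (_ : c :: take n x = take n.+1 (c :: x)) //; exact: infix_take.
by rewrite (h _ ia) (h _ ib).
Qed.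


Lemma leftM_ext (d : S) T w p : leftM T w -> ~~ rightM T w -> occ T w p ->
  leftM T (rcons w (nth d T (p + size w))).
Proof.
move=> lw nR oc; have lp := notR_lt nR oc; set c := nth d T (p + size w).
have irc : infix (rcons w c) T by exact: occ_infix (occ_rcons d oc lp).
have hc e : infix (e :: w) T -> infix (e :: rcons w c) T.
  move=> /infix_occ [q oq]; have o1 := occ_cons oq; have l1 := notR_lt nR o1.
  have E := notR_eq d nR o1 oc.
  have l2 : q + size (e :: w) < size T by rewrite /=; lia.
  have := occ_rcons d oq l2.
  rewrite /= (_ : q + (size w).+1 = q.+1 + size w); last lia.
  by rewrite E => /occ_infix.
move: lw; rewrite /leftM /is_substr => /andP[iw /orP[pw|hh]].
- have o0 : occ T w 0 by rewrite occ0.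
  have e := notR_eq d nR oc o0.
  have := occ_rcons d o0 (notR_lt nR o0); rewrite -e occ0 => pr.
  by rewrite irc pr.
- rewrite irc /=; apply/orP; right.
  move/hasP: hh => [a aT /hasP[b bT /and3P[ab ia ib]]].
  apply/hasP; exists a => //; apply/hasP; exists b => //.
  by rewrite ab (hc _ ia) (hc _ ib).
Qed.

Lemma maxrep_follow T x : maxrep T x -> x != T -> exists a, infix (rcons x a) T.
Proof.
rewrite /maxrep /leftM /rightM /is_substr.
case/andP => /andP[ix /orP Lx] /andP[_ /orP Rx] neq.
case: Rx => [sx | hh]; last first.
  by move/hasP: hh => [a _ /hasP[b _ /and3P[_ ia _]]]; exists a.
case: Lx => [px | hh].
- have lt : size x < size T.
    rewrite ltn_neqAle size_prefix // andbT; apply: contra neq => /eqP E.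
    by move: px; rewrite prefixE E take_size eq_sym.
  have [d _] : exists d : S, True by case: (T) lt => // t0 ?; exists t0.
  have o0 : occ T x 0 by rewrite occ0.
  by exists (nth d T (0 + size x)); apply: occ_infix (occ_rcons d o0 _).
- move/hasP: hh => [a _ /hasP[b _ /and3P[ab ia ib]]].
  have [pa oa] := infix_occ ia; have [pb ob] := infix_occ ib.
  have oa1 := occ_cons oa; have ob1 := occ_cons ob.
  case: (ltnP (pa.+1 + size x) (size T)) => h1.
    by exists (nth a T (pa.+1 + size x)); apply: occ_infix (occ_rcons a oa1 h1).
  case: (ltnP (pb.+1 + size x) (size T)) => h2.
    by exists (nth a T (pb.+1 + size x)); apply: occ_infix (occ_rcons a ob1 h2).
  have sa := occ_size oa; have sb := occ_size ob; rewrite /= in sa sb.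
  have epq : pa = pb by lia.
  have na := occ_nth a oa (isT : 0 < size (a :: x)).
  have nb := occ_nth a ob (isT : 0 < size (b :: x)).
  by move: ab; rewrite -[a]na -[b]nb /= epq eqxx.
Qed.

Lemma Dout_pos T x : (exists a, infix (rcons x a) T) -> 0 < Dout T x.
Proof.
move=> [a ia]; rewrite /Dout size_filter -has_count; apply/hasP; exists a => //.
by rewrite mem_undup (infix_rcons_mem ia).
Qed.

Lemma Dout_le1 T x : infix x T -> ~~ rightM T x -> Dout T x <= 1.
Proof.
move=> ix nR; rewrite /Dout.
set L := filter _ _.
have uL : uniq L by rewrite filter_uniq // undup_uniq.
have mL c : c \in L -> infix (rcons x c) T && (c \in T).
  by rewrite mem_filter mem_undup.
case E: L uL mL => [|a [|b L']] //= /andP[]; rewrite inE negb_or => /andP[ab _] _ mL.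
have /andP[ia aT] := mL a (mem_head _ _).
have /andP[ib bT] : infix (rcons x b) T && (b \in T) by apply: mL; rewrite !inE eqxx orbT.
case/negP: nR; rewrite /rightM /is_substr ix /=; apply/orP; right.
by apply/hasP; exists a => //; apply/hasP; exists b => //; rewrite ab ia ib.
Qed.

Lemma count_split (A : eqType) (p q : pred A) (s : seq A) :
  count p s = count (fun a => p a && q a) s + count (fun a => p a && ~~ q a) s.
Proof. by elim: s => //= a s ->; case: (p a); case: (q a) => /=; lia. Qed.


Definition slice T i e := take (e - i) (drop i T).

Lemma occ_slice T i e : occ T (slice T i e) i.
Proof. exact: occ_takedrop. Qed.

Lemma infix_slice T i e : infix (slice T i e) T.
Proof. exact: occ_infix (occ_slice T i e). Qed.

Lemma size_slice T i e : i <= e -> e <= size T -> size (slice T i e) = e - i.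
Proof. by move=> h1 h2; rewrite /slice size_takel // size_drop; lia. Qed.

Lemma slice_rcons (d : S) T i e : i <= e -> e < size T ->
  slice T i e.+1 = rcons (slice T i e) (nth d T e).
Proof.
move=> h1 h2; rewrite /slice subSn // (take_nth d); last by rewrite size_drop; lia.
by rewrite nth_drop; congr (rcons _ (nth _ _ _)); lia.
Qed.

Lemma mem_substrings T x : (x \in substrings T) = infix x T.
Proof.
rewrite /substrings mem_undup; apply/idP/idP.
  by move/allpairsP => [[i j] [_ _ /= ->]]; apply: occ_infix (occ_takedrop T j i).
move=> ix; have := ix; rewrite infixE => /eqP E.
rewrite -E; apply: (allpairs_f (fun i j => take j (drop i T))); rewrite mem_iota /= add0n ltnS.
  by rewrite infixTindex.
exact: size_infix.
Qed.

Lemma period_neq (d : S) T k t1 t2 j1 j2 : t1 < t2 -> t2 <= k ->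
  k + j1 <= size T -> k + j2 <= size T ->
  (forall j, j < j2 -> ~~ rightM T (slice T t2 (k + j))) ->
  slice T t1 (k + j1) != slice T t2 (k + j2).
Proof.
move=> lt12 le2 h1 h2 H; apply/negP => /eqP E.
set y := slice T t2 (k + j2) in E.
have sy1 : size (slice T t1 (k + j1)) = k + j1 - t1 by apply: size_slice => //; lia.
have sy : size y = k + j2 - t2 by apply: size_slice => //; lia.
rewrite E in sy1.
set dd := t2 - t1.
have ej : j2 = j1 + dd by rewrite /dd; lia.
have o1 : occ T y t1 by rewrite -E; exact: occ_slice.
have o2 : occ T y t2 by exact: occ_slice.
have ypos : 0 < size y by lia.
have per m : m + dd < size y -> nth d y (m + dd) = nth d y m.
  move=> hm; rewrite -(occ_nth d o1 hm) -(occ_nth d o2 (_ : m < size y)); last by lia.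
  by congr nth; rewrite /dd; lia.
have step p : occ T y p -> occ T y (p + dd).
  move=> op; have lp : p + size y <= size T by have := occ_size op; lia.
  suff : forall n, n <= size y -> occ T (take n y) (p + dd).
    by move/(_ _ (leqnn _)); rewrite take_size.
  elim=> [|n IH] hn; first by rewrite /occ !take0.
  have hn' : n < size y by lia.
  rewrite (take_nth d hn').
  have IH' := IH (ltnW hn').
  have sz : size (take n y) = n by rewrite size_takel // ltnW.
  suff [lt eq] : p + dd + n < size T /\ nth d T (p + dd + n) = nth d y n.
    by have := occ_rcons d IH'; rewrite sz => /(_ lt); rewrite eq.
  case: (ltnP (n + dd) (size y)) => hnd.
    split; first by lia.
    rewrite -per // -(occ_nth d op hnd); congr nth; lia.
  have nR : ~~ rightM T (take n y).
    have -> : take n y = slice T t2 (k + (n - (k - t2))).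
      rewrite /y /slice take_takel; last by lia.
      congr take; lia.
    apply: H; lia.
  have o2n : occ T (take n y) t2 := occ_prefix o2 (prefix_take _ _).
  have := notR_lt nR IH'; rewrite sz => lt; split => //.
  by have := notR_eq d nR IH' o2n; rewrite sz => ->; exact: (occ_nth d o2 hn').
have all_i i : occ T y (t2 + i * dd).
  elim: i => [|i IH]; first by rewrite mul0n addn0.
  by rewrite (_ : t2 + i.+1 * dd = t2 + i * dd + dd); [exact: step | rewrite mulSn; lia].
have := occ_size (all_i (size T)).
have : size T <= size T * dd by rewrite leq_pmulr // /dd subn_gt0.
lia.
Qed.


Definition jmin T k t := find (fun j => rightM T (slice T t (k + j))) (iota 0 (size T - k).+1).
Definition clo T k t := slice T t (k + jmin T k t).

Lemma rightM_drop T t : rightM T (drop t T).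
Proof. by rewrite /rightM /is_substr infix_drop suffix_drop. Qed.

Lemma jmin_props T k t : t <= k -> k <= size T ->
  [/\ k + jmin T k t <= size T, rightM T (clo T k t) &
      forall j, j < jmin T k t -> ~~ rightM T (slice T t (k + j))].
Proof.
move=> htk hk; set p := fun j => rightM T (slice T t (k + j)).
have hh : has p (iota 0 (size T - k).+1).
  apply/hasP; exists (size T - k); first by rewrite mem_iota; lia.
  rewrite /p /slice (_ : k + (size T - k) - t = size (drop t T)); last by rewrite size_drop; lia.
  by rewrite take_size rightM_drop.
have hf : jmin T k t < (size T - k).+1 by rewrite /jmin -[X in _ < X](size_iota 0) -has_find.
split; first by lia.
  by have := nth_find 0 hh; rewrite nth_iota.
move=> j hj; have := before_find 0 hj; rewrite nth_iota; last by lia.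
by rewrite /p add0n => ->.
Qed.

Lemma clo_maxrep (d : S) T k t : t <= k -> k <= size T -> leftM T (slice T t k) ->
  maxrep T (clo T k t).
Proof.
move=> htk hk hl; have [hs hr hb] := jmin_props htk hk.
rewrite /maxrep hr andbT /clo.
suff : forall j, j <= jmin T k t -> leftM T (slice T t (k + j)) by apply.
elim=> [|j IH] hj; first by rewrite addn0.
have lt : k + j < size T by lia.
rewrite addnS (slice_rcons d); [|lia|lia].
have := leftM_ext d (IH (ltnW hj)) (hb j hj) (occ_slice T t (k + j)).
rewrite size_slice; [|lia|lia].
by rewrite (_ : t + (k + j - t) = k + j) //; lia.
Qed.

Lemma clo_inj T k t1 t2 : t1 <= k -> t2 <= k -> k <= size T ->
  clo T k t1 = clo T k t2 -> t1 = t2.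
Proof.
move=> h1 h2 hk E.
have gen u1 u2 : u1 < u2 -> u2 <= k -> clo T k u1 != clo T k u2.
  move=> lt le.
  have [d _] : exists d : S, True.
    have : 0 < size T by lia.
    by case: (T) => [|t0 ?] //= _; exists t0.
  have u1k : u1 <= k by lia.
  have [s1 _ _] := jmin_props u1k hk.
  have [s2 _ b2] := jmin_props le hk.
  by rewrite /clo; apply: (period_neq d lt le s1 s2 b2).
case: (ltngtP t1 t2) => // h.
  by have := gen _ _ h h2; rewrite E eqxx.
by have := gen _ _ h h1; rewrite E eqxx.
Qed.

Lemma count_leftM_slices (d : S) T k : k <= size T ->
  count (fun t => leftM T (slice T t k)) (iota 0 k.+1) <= count (maxrep T) (substrings T).
Proof.
move=> hk; rewrite -!size_filter; set L := filter _ (iota 0 k.+1).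
rewrite -(size_map (clo T k) L); apply: uniq_leq_size.
  rewrite map_inj_in_uniq ?filter_uniq ?iota_uniq //.
  move=> t1 t2; rewrite !mem_filter !mem_iota /= => /andP[_ h1] /andP[_ h2].
  by apply: clo_inj; lia.
move=> z /mapP[t]; rewrite mem_filter mem_iota => /andP[lm /andP[_ ht]] ->.
rewrite mem_filter (clo_maxrep d _ hk lm); last by lia.
by rewrite mem_substrings /clo infix_slice.
Qed.

Lemma count_maxrep T : count (maxrep T) (substrings T) <= cdawg_size T + 1.
Proof.
rewrite /cdawg_size (count_split _ (fun x => x != T)) /=.
have u : uniq (substrings T) by rewrite /substrings undup_uniq.
have c1 : count (fun a => maxrep T a && ~~ (a != T)) (substrings T) <= 1.
  apply: (@leq_trans (count (pred1 T) (substrings T))).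
    by apply: sub_count => a /= /andP[_]; rewrite negbK.
  by rewrite count_uniq_mem // leq_b1.
suff : count (fun a => maxrep T a && (a != T)) (substrings T) <=
       \sum_(x <- substrings T | maxrep T x) Dout T x by lia.
rewrite -sum1_count big_mkcondr /=. 
apply: leq_sum => x mx; case: ifP => // ne.
exact: Dout_pos (maxrep_follow mx ne).
Qed.


Lemma Dold_le T T' x :
  count (fun a => infix (rcons x a) T' && infix (rcons x a) T) (undup T') <= Dout T x.
Proof.
rewrite /Dout -size_filter; apply: uniq_leq_size; first by rewrite filter_uniq // undup_uniq.
move=> a; rewrite !mem_filter => /andP[/andP[_ h] _].
by rewrite /is_substr h mem_undup (infix_rcons_mem h).
Qed.

End Occ.

Lemma count_le1 (A : eqType) (p : pred A) (s : seq A) : uniq s ->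
  (forall x y, p x -> p y -> x = y) -> count p s <= 1.
Proof.
move=> us H; rewrite -size_filter.
case E: (filter p s) => [|a l] //.
have ua : uniq (a :: l) by rewrite -E filter_uniq.
have pa : p a.
  have : a \in filter p s by rewrite E mem_head.
  by rewrite mem_filter => /andP[].
have sub : {subset (a :: l) <= [:: a]}.
  move=> z; rewrite -E mem_filter => /andP[pz _].
  by rewrite (H _ _ pz pa) mem_head.
exact: uniq_leq_size ua sub.
Qed.

Lemma sum_sub (A : eqType) (X Y : seq A) (p q : pred A) (F : A -> nat) :
  uniq X -> uniq Y -> (forall x, x \in X -> p x -> (x \in Y) && q x) ->
  \sum_(x <- X | p x) F x <= \sum_(y <- Y | q y) F y.
Proof.
move=> uX uY H; rewrite -big_filter -[X in _ <= X]big_filter.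
set X' := filter p X; set Y' := filter q Y.
rewrite [X in _ <= X](bigID (fun y => y \in X')) /=.
suff -> : \sum_(x <- X') F x = \sum_(y <- Y' | y \in X') F y by apply: leq_addr.
rewrite -[in RHS]big_filter; apply: perm_big; apply: uniq_perm.
- by rewrite filter_uniq.
- by rewrite !filter_uniq.
move=> z; rewrite mem_filter; apply/idP/idP; last by case/andP.
move=> zX; rewrite zX /= mem_filter.
by move: zX; rewrite mem_filter => /andP[pz zX]; rewrite andbC; apply: H.
Qed.


Section Edit.
Variable S : eqType.
Variables (d : S) (P m m' Q : seq S).
Hypothesis hm : size m' <= 1.
Local Notation T := (P ++ m ++ Q).
Local Notation T' := (P ++ m' ++ Q).
Local Notation k := (size P).

Definition MS t (x : seq S) := [&& prefix x (drop t T'), infix x T &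
  ((size x == size (drop t T')) || ~~ infix (take (size x).+1 (drop t T')) T)].

Lemma MS_lt t (u v : seq S) : MS t u -> MS t v -> size u < size v -> False.
Proof.
move=> /and3P[pu iu hu] /and3P[pv iv hv] lt.
have sv := size_prefix pv.
move: hu; rewrite (_ : (size u == size (drop t T')) = false); last by apply/negbTE; rewrite neq_ltn; lia.
move: pv; rewrite prefixE => /eqP ev.
have E : take (size u).+1 (drop t T') = take (size u).+1 v by rewrite -ev take_takel.
rewrite /= E => /negP; apply.
by apply: (@infix_trans _ v) => //; apply: infix_take.
Qed.

Lemma MS_uniq t (u v : seq S) : MS t u -> MS t v -> u = v.
Proof.
move=> mu mv; case: (ltngtP (size u) (size v)) => h.
- by case: (MS_lt mu mv h).
- by case: (MS_lt mv mu h).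
move: mu mv => /and3P[pu _ _] /and3P[pv _ _].
move: pu pv; rewrite !prefixE => /eqP eu /eqP ev.
by rewrite -eu -ev h.
Qed.

Lemma infix_Q (z : seq S) : infix z Q -> infix z T.
Proof. by move=> h; do 2 apply: infix_catl. Qed.

Lemma infix_P (z : seq S) : infix z P -> infix z T.
Proof. by move=> h; apply: infix_catr. Qed.

Lemma drop_T'_big t : size (P ++ m') <= t -> drop t T' = drop (t - size (P ++ m')) Q.
Proof. by move=> h; rewrite catA drop_cat ltnNge h. Qed.

Lemma drop_cat_le (A : Type) t (s1 s2 : seq A) : t <= size s1 -> drop t (s1 ++ s2) = drop t s1 ++ s2.
Proof.
move=> h; rewrite drop_cat; case: ltnP => // h2.
have -> : t = size s1 by lia.
by rewrite drop_size subnn drop0.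
Qed.

Lemma newpair (x : seq S) a : infix x T -> infix (rcons x a) T' -> ~~ infix (rcons x a) T ->
  exists2 t, t <= k & MS t x && (nth d T' (t + size x) == a).
Proof.
move=> ix h1 h2; have [t ot] := infix_occ h1.
have tk : t <= k.
  rewrite leqNgt; apply/negP => ht; case/negP: h2.
  have hb : size (P ++ m') <= t by rewrite size_cat; lia.
  move: ot; rewrite /occ (drop_T'_big hb) => ot.
  by apply: infix_Q; apply: (occ_infix ot).
exists t => //.
have [ox _ na] := occ_rconsE d ot.
rewrite na eqxx andbT /MS ix -occ0.
rewrite /occ drop0.
move: ox; rewrite /occ => ox; rewrite ox /=.
move: ot; rewrite /occ size_rcons => /eqP ->.
by rewrite h2 orbT.
Qed.

Lemma MS_slice t (x : seq S) : t <= k -> MS t x -> leftM T x -> leftM T (slice T t k).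
Proof.
move=> tk /and3P[px ix hx] lx.
have eT : drop t T = drop t P ++ m ++ Q by rewrite drop_cat_le.
have eT' : drop t T' = drop t P ++ m' ++ Q by rewrite drop_cat_le.
have sP : size (drop t P) = k - t by rewrite size_drop.
have -> : slice T t k = drop t P by rewrite /slice eT take_size_cat.
have sx : k - t <= size x.
  rewrite leqNgt; apply/negP => lt.
  move: hx; rewrite (_ : (size x == size (drop t T')) = false); last first.
    by apply/negbTE; rewrite eT' !size_cat sP neq_ltn; lia.
  rewrite /= eT' takel_cat; last by lia.
  move/negP; apply; apply: infix_P.
  by apply: (@infix_trans _ (drop t P)); [apply: infix_take | apply: infix_drop].
move: px; rewrite prefixE => /eqP ex.
have -> : drop t P = take (k - t) x.
  by rewrite -ex take_takel // eT' take_size_cat.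
exact: leftM_take.
Qed.

Lemma N2_pos (x : seq S) : inN2 T T' x -> exists2 t, t <= k & MS t x.
Proof.
case/and4P => mx nmx _ lx.
have ix : infix x T by move: lx; rewrite /leftM /is_substr => /andP[].
have nR : ~~ rightM T x by move: nmx; rewrite /maxrep lx.
move: mx; rewrite /maxrep /rightM /is_substr => /andP[_ /andP[ix' /orP[sx|hh]]].
- set t := size T' - size x.
  have dt : drop t T' = x by move: sx; rewrite suffixE => /eqP.
  have tk : t <= k.
    rewrite leqNgt; apply/negP => ht; case/negP: nR.
    have hb : size (P ++ m') <= t by rewrite size_cat; lia.
    move: dt; rewrite (drop_T'_big hb) => dq.
    rewrite /rightM /is_substr ix /=.
    have : suffix x Q by rewrite -dq; apply: suffix_drop.
    by rewrite catA => sq; rewrite (suffix_catr _ sq).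
  exists t => //.
  by rewrite /MS dt prefix_refl ix eqxx.
- move/hasP: hh => [a aT /hasP[b bT /and3P[ab ia ib]]].
  case ha : (infix (rcons x a) T).
    case hb : (infix (rcons x b) T).
      case/negP: nR; rewrite /rightM /is_substr ix /=; apply/orP; right.
      apply/hasP; exists a; first exact: infix_rcons_mem ha.
      apply/hasP; exists b; first exact: infix_rcons_mem hb.
      by rewrite ab ha hb.
    have [t tk /andP[ms _]] := newpair ix ib (negbT hb).
    by exists t.
  have [t tk /andP[ms _]] := newpair ix ia (negbT ha).
  by exists t.
Qed.

Definition cnt (x : seq S) := count (fun t => MS t x) (iota 0 k.+1).

Lemma Dnew_le (x : seq S) : infix x T ->
  count (fun a => infix (rcons x a) T' && ~~ infix (rcons x a) T) (undup T') <= cnt x.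
Proof.
move=> ix; rewrite /cnt -!size_filter.
set B := filter _ (iota 0 k.+1).
rewrite -(size_map (fun t => nth d T' (t + size x)) B).
apply: uniq_leq_size; first by rewrite filter_uniq // undup_uniq.
move=> a; rewrite mem_filter => /andP[/andP[h1 h2] _].
have [t tk /andP[ms /eqP na]] := newpair ix h1 h2.
apply/mapP; exists t => //.
by rewrite mem_filter ms mem_iota /=; lia.
Qed.

Lemma pointwise (x : seq S) : inN2 T T' x || inQ T T' x ->
  Dout T' x <= (if maxrep T x then Dout T x else 0) + (cnt x + cnt x).
Proof.
move=> R.
have lx : leftM T x.
  by case/orP: R => [/and4P[_ _ _ ->] | /and3P[_ /andP[-> _] _]].
have ix : infix x T by move: lx; rewrite /leftM /is_substr => /andP[].
have e : Dout T' x = count (fun a => infix (rcons x a) T' && infix (rcons x a) T) (undup T')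
    + count (fun a => infix (rcons x a) T' && ~~ infix (rcons x a) T) (undup T').
  by rewrite /Dout size_filter (count_split _ (fun a => infix (rcons x a) T)).
have h1 := Dold_le T T' x.
have h2 := Dnew_le ix.
case mxT : (maxrep T x).
  by rewrite e; lia.
have n2 : inN2 T T' x by move: R; rewrite /inQ mxT andbF orbF.
have [t tk ms] := N2_pos n2.
have c1 : 0 < cnt x.
  by rewrite /cnt -has_count; apply/hasP; exists t => //; rewrite mem_iota; lia.
have nR : ~~ rightM T x by move: mxT; rewrite /maxrep lx /= => ->.
have := Dout_le1 ix nR.
rewrite e; lia.
Qed.

Lemma sum_cnt :
  \sum_(x <- substrings T' | inN2 T T' x || inQ T T' x) cnt x <=
  count (fun t => leftM T (slice T t k)) (iota 0 k.+1).
Proof.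
rewrite /cnt.
under eq_bigr => x _ do rewrite -sum1_count.
rewrite (exchange_big_dep xpredT) //.
rewrite -[X in _ <= X]sum1_count [X in _ <= X]big_mkcond [X in X <= _]big_mkcond.
rewrite [X in X <= _]big_seq [X in _ <= X]big_seq.
apply: leq_sum => t; rewrite mem_iota => /andP[_ tk].
rewrite sum1_count.
have u : uniq (substrings T') by rewrite /substrings undup_uniq.
case: ifP => hl.
  apply: count_le1 => // a1 a2 /andP[_ m1] /andP[_ m2].
  exact: MS_uniq m1 m2.
rewrite leqn0 -(negbK (_ == 0)) -lt0n -has_count; apply/negP => /hasP [x _ /andP[R ms]].
have lx : leftM T x.
  by case/orP: R => [/and4P[_ _ _ ->] | /and3P[_ /andP[-> _] _]].
by rewrite (MS_slice _ ms lx) in hl; lia.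
Qed.

Lemma main_edit :
  \sum_(x <- substrings T' | inN2 T T' x || inQ T T' x) Dout T' x <= 3 * cdawg_size T + 2.
Proof.
apply: (@leq_trans (\sum_(x <- substrings T' | inN2 T T' x || inQ T T' x)
   ((if maxrep T x then Dout T x else 0) + (cnt x + cnt x)))).
  by apply: leq_sum => x; apply: pointwise.
rewrite big_split [\sum_(_ <- _ | _) (cnt _ + cnt _)]big_split.
have h1 : \sum_(x <- substrings T' | inN2 T T' x || inQ T T' x)
           (if maxrep T x then Dout T x else 0) <= cdawg_size T.
  rewrite -big_mkcondr /cdawg_size; apply: sum_sub.
  - by rewrite /substrings undup_uniq.
  - by rewrite /substrings undup_uniq.
  move=> x; rewrite mem_substrings => ix /andP[_ mx]; rewrite mx andbT mem_substrings.
  by move: mx; rewrite /maxrep /leftM /is_substr => /andP[/andP[]].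
have h2 := sum_cnt.
have hk : k <= size T by rewrite size_cat; lia.
have h3 := count_leftM_slices d hk.
have h4 := count_maxrep T.
apply: (leq_trans (leq_add h1 (leq_add h2 h2))); lia.
Qed.

End Edit.

Lemma main_gen (S : eqType) (d : S) (T T' P m m' Q : seq S) :
  size m' <= 1 -> T = P ++ m ++ Q -> T' = P ++ m' ++ Q ->
  \sum_(x <- substrings T' | inN2 T T' x || inQ T T' x) Dout T' x <= 3 * cdawg_size T + 2.
Proof. by move=> hm -> ->; apply: main_edit. Qed.

Theorem lemma12 (S : eqType) (T T' : seq S) :
  single_edit T T' ->
  \sum_(x <- substrings T' | inN2 T T' x || inQ T T' x) Dout T' x
    <= 3 * cdawg_size T + 2.
Proof.
have split1 i : T = take i T ++ take 1 (drop i T) ++ drop i.+1 T.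
  by rewrite (_ : drop i.+1 T = drop 1 (drop i T)) ?cat_take_drop // drop_drop add1n.
case => [[i [a [hi ->]]] | [[i [a [hi _ ->]]] | [i [hi ->]]]].
- apply: (@main_gen S a T _ (take i T) [::] [:: a] (drop i T)) => //.
  by rewrite cat_take_drop.
- exact: (@main_gen S a T _ (take i T) (take 1 (drop i T)) [:: a] (drop i.+1 T)).
- have [d _] : exists d : S, True.
    have : 0 < size T by lia.
    by case: (T) => [|t0 ?] //= _; exists t0.
  exact: (@main_gen S d T _ (take i T) (take 1 (drop i T)) [::] (drop i.+1 T)).
Qed.
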